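(* Let $\Bbbk$ be a field of characteristic zero, $S=\Bbbk[x_1,x_2,x_3,x_4]$, $d\geq 5$, and $I=(x_1^d,x_2^d,x_3^d,x_4^d,x_1^3x_2^{d-3})$. Then $S/I$ fails the WLP by surjectivity in degree $2d-3$.
   Context: $\mathrm{HF}(A,k)=\dim_\Bbbk A_k$. For a monomial ideal $I$, $A=S/I$ fails the WLP by surjectivity in degree $i$ if $\mathrm{HF}(A,i)\ge\mathrm{HF}(A,i+1)$ and $\times(x_1+\cdots+x_4): A_i\to A_{i+1}$ is not surjective. *)

(* Defs.v *)
From mathcomp Require Import all_boot all_algebra.
From mathcomp Require Import mpoly.
Set Implicit Arguments. Unset Strict Implicit. Unset Printing Implicit Defensive.
Import GRing.Theory.
Local Open Scope ring_scope.

Section Graded.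
Context {k : fieldType} {n : nat}.

Definition in_ideal (gens : seq {mpoly k[n]}) (p : {mpoly k[n]}) : Prop :=
  exists cs : 'I_(size gens) -> {mpoly k[n]},
    p = \sum_(j < size gens) cs j * gens`_j.

(* f_1,...,f_m are homogeneous of degree i and their classes are linearly
   independent in A_i, where A = S/I and I = (gens). *)
Definition indep_in_deg (gens : seq {mpoly k[n]}) (i m : nat)
    (f : 'I_m -> {mpoly k[n]}) : Prop :=
  (forall j, f j \is i.-homog) /\
  (forall c : 'I_m -> k, in_ideal gens (\sum_(j < m) c j *: f j) ->
     forall j, c j = 0).

Definition HF_atleast (gens : seq {mpoly k[n]}) (i m : nat) : Prop :=
  exists f : 'I_m -> {mpoly k[n]}, indep_in_deg gens i f.

Definition HF_ge (gens : seq {mpoly k[n]}) (i j : nat) : Prop :=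
  forall m, HF_atleast gens j m -> HF_atleast gens i m.

Definition mult_surj (gens : seq {mpoly k[n]}) (l : {mpoly k[n]}) (i : nat)
    : Prop :=
  forall f, f \is i.+1.-homog ->
    exists g, g \is i.-homog /\ in_ideal gens (f - l * g).

Definition fails_WLP_surj (gens : seq {mpoly k[n]}) (i : nat) : Prop :=
  HF_ge gens i i.+1 /\
  ~ mult_surj gens (\sum_(j < n) 'X_j) i.

End Graded.

(* the variables x_1..x_4 of k[x_1,x_2,x_3,x_4] (x 0 = x_1, ..., x 3 = x_4) *)
Definition x4 {k : fieldType} (i : nat) : {mpoly k[4]} := 'X_(inord i).

Definition I_lemma5p4 (k : fieldType) (d : nat) : seq {mpoly k[4]} :=
  [:: x4 0 ^+ d; x4 1 ^+ d; x4 2 ^+ d; x4 3 ^+ d;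
      x4 0 ^+ 3 * x4 1 ^+ (d - 3)].

(* Main.v *)
Require Import Defs.
From mathcomp Require Import all_boot all_algebra.
From mathcomp Require Import mpoly.
From mathcomp Require Import zify ring.
Set Implicit Arguments. Unset Strict Implicit. Unset Printing Implicit Defensive.
Import GRing.Theory.
Local Open Scope ring_scope.

Section Ideal.
Variables (k : fieldType) (n : nat).
Implicit Types (p q : {mpoly k[n]}) (m g : 'X_{1..n}).

Lemma coefMX0 p g m : ~~ (g <= m)%MM -> (p * 'X_[g])@_m = 0.
Proof.
move=> ngm; rewrite [p]mpolyE big_distrl /= raddf_sum /=.
apply: big1 => u _; rewrite -scalerAl -mpolyXD mcoeffZ mcoeffX.
case: eqP => [e|]; last by rewrite mulr0.
by move: ngm; rewrite -e lem_addl.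
Qed.

Lemma ideal_coef0 (Gs : seq 'X_{1..n}) p m :
  in_ideal [seq 'X_[g] | g <- Gs] p -> (forall g, g \in Gs -> ~~ (g <= m)%MM) ->
  p@_m = 0.
Proof.
case=> cs -> hm; rewrite raddf_sum /=; apply: big1 => j _.
have hj : (j < size Gs)%N by rewrite -(size_map (fun g => 'X_[g] : {mpoly k[n]})).
rewrite (nth_map 0%MM) //; apply: coefMX0; apply: hm; exact: mem_nth.
Qed.

Lemma ideal_of_supp (Gs : seq 'X_{1..n}) p :
  (forall m, m \in msupp p -> has (fun g => (g <= m)%MM) Gs) ->
  in_ideal [seq 'X_[g] | g <- Gs] p.
Proof.
move=> hp.
pose sel m := find (fun g => (g <= m)%MM) Gs.
exists (fun j : 'I_(size [seq 'X_[g] : {mpoly k[n]} | g <- Gs]) => \sum_(m <- msupp p) (if sel m == val j then p@_m *: 'X_[m - nth 0%MM Gs j] else 0)).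
rewrite size_map.
transitivity (\sum_(j < size Gs) \sum_(m <- msupp p) (if sel m == val j then p@_m *: 'X_[m] else 0)).
  rewrite exchange_big /= [p in LHS]mpolyE; apply: eq_big_seq => m hm.
  have hs : (sel m < size Gs)%N by rewrite -has_find hp.
  rewrite (bigD1 (Ordinal hs)) //= eqxx big1 ?addr0 // => j hj.
  case: eqP => // e; move: hj; suff -> : j = Ordinal hs by rewrite eqxx.
  by apply: val_inj; rewrite /= e.
apply: eq_bigr => j _; rewrite big_distrl /=; apply: eq_big_seq => m hm.
case: eqP => [e|]; last by rewrite mul0r.
have hj : (j < size Gs)%N by [].
rewrite (nth_map 0%MM) // -scalerAl -mpolyXD submK //.
have := nth_find 0%MM (hp m hm); by rewrite -/(sel m) e.
Qed.

End Ideal.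

Definition co (m : 'X_{1..4}) (i : nat) : nat := m (inord i).

Lemma ord4P (i : 'I_4) : [\/ i = inord 0, i = inord 1, i = inord 2 | i = inord 3].
Proof.
case: i => [[|[|[|[|i]]]] Hi] //; [constructor 1|constructor 2|constructor 3|constructor 4];
  by apply: val_inj; rewrite /= inordK.
Qed.

Lemma mdeg4 m : mdeg m = (co m 0 + co m 1 + co m 2 + co m 3)%N.
Proof.
rewrite mdegE !big_ord_recl big_ord0 addn0 /co !addnA.
by congr (_ + _ + _ + _); congr (m _); apply: val_inj; rewrite /= inordK.
Qed.

Definition mk4 (a b c e : nat) : 'X_{1..4} := [multinom nth 0%N [:: a; b; c; e] i | i < 4].

Lemma co_mk4 a b c e :
  [/\ co (mk4 a b c e) 0 = a, co (mk4 a b c e) 1 = b, co (mk4 a b c e) 2 = c & co (mk4 a b c e) 3 = e].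
Proof. by rewrite /co /mk4 !mnmE !inordK. Qed.

Lemma mnm4P m1 m2 : co m1 0 = co m2 0 -> co m1 1 = co m2 1 -> co m1 2 = co m2 2 ->
  co m1 3 = co m2 3 -> m1 = m2.
Proof. by move=> h0 h1 h2 h3; apply/mnmP => i; case: (ord4P i) => ->. Qed.

Lemma coD m1 m2 i : co (m1 + m2)%MM i = (co m1 i + co m2 i)%N.
Proof. by rewrite /co mnmDE. Qed.

Lemma coU j i : (j < 4)%N -> (i < 4)%N -> co U_(inord j) i = (j == i).
Proof. by move=> hj hi; rewrite /co mnm1E -(inj_eq val_inj) /= !inordK. Qed.

Lemma coUn j i d : (j < 4)%N -> (i < 4)%N -> co (U_(inord j) *+ d)%MM i = ((j == i) * d)%N.
Proof. by move=> hj hi; rewrite /co mulmnE -/(co _ i) coU. Qed.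

Lemma lem4P m1 m2 : reflect [/\ co m1 0 <= co m2 0, co m1 1 <= co m2 1, co m1 2 <= co m2 2
   & co m1 3 <= co m2 3]%N (m1 <= m2)%MM.
Proof.
apply: (iffP mnm_lepP) => [h|[h0 h1 h2 h3] i]; first by split; apply: h.
by case: (ord4P i) => ->.
Qed.

Definition Gs (d : nat) : seq 'X_{1..4} :=
  [:: U_(inord 0) *+ d; U_(inord 1) *+ d; U_(inord 2) *+ d; U_(inord 3) *+ d;
      U_(inord 0) *+ 3 + U_(inord 1) *+ (d - 3)]%MM.

Lemma gensE (k : fieldType) d : I_lemma5p4 k d = [seq 'X_[g] | g <- Gs d].
Proof. by rewrite /I_lemma5p4 /x4 /= !mpolyXn mpolyXD. Qed.

Definition stdN (D a b c e : nat) :=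
  [&& a < D + 5, b < D + 5, c < D + 5, e < D + 5 & ~~ ((3 <= a) && (D + 2 <= b))]%N.

Definition stdM D m := stdN D (co m 0) (co m 1) (co m 2) (co m 3).

Lemma std_nodiv D m g : stdM D m -> g \in Gs (D + 5) -> ~~ (g <= m)%MM.
Proof.
rewrite /stdM /stdN => /and5P [h0 h1 h2 h3 h4].
move=> hg; apply/negP => /lem4P H4; move: hg H4.
rewrite /Gs !inE => /orP[/eqP->|/orP[/eqP->|/orP[/eqP->|/orP[/eqP->|/eqP->]]]];
  rewrite ?coD !coUn // ?coD ?coU //= => -[] *; lia.
Qed.

Lemma nstd_div D m : ~~ stdM D m -> has (fun g => (g <= m)%MM) (Gs (D + 5)).
Proof.
rewrite /stdM /stdN => h.
have H g : g \in Gs (D + 5) -> (g <= m)%MM -> has (fun g => (g <= m)%MM) (Gs (D + 5)).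
  by move=> hg hgm; apply/hasP; exists g.
case: (ltnP (co m 0) (D + 5)) => h0; last first.
  apply: (H (U_(inord 0) *+ (D + 5))%MM); first by rewrite /Gs !inE eqxx.
  by apply/lem4P; rewrite !coUn //=; split; lia.
case: (ltnP (co m 1) (D + 5)) => h1; last first.
  apply: (H (U_(inord 1) *+ (D + 5))%MM); first by rewrite /Gs !inE eqxx !orbT.
  by apply/lem4P; rewrite !coUn //=; split; lia.
case: (ltnP (co m 2) (D + 5)) => h2; last first.
  apply: (H (U_(inord 2) *+ (D + 5))%MM); first by rewrite /Gs !inE eqxx !orbT.
  by apply/lem4P; rewrite !coUn //=; split; lia.
case: (ltnP (co m 3) (D + 5)) => h3; last first.
  apply: (H (U_(inord 3) *+ (D + 5))%MM); first by rewrite /Gs !inE eqxx !orbT.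
  by apply/lem4P; rewrite !coUn //=; split; lia.
move: h; rewrite h0 h1 h2 h3 /= negbK => /andP [h4 h5].
apply: (H (U_(inord 0) *+ 3 + U_(inord 1) *+ (D + 5 - 3))%MM); first by rewrite /Gs !inE eqxx !orbT.
by apply/lem4P; rewrite !coD !coUn // ?coD ?coU //=; split; lia.
Qed.

Section Lam.
Variables (k : fieldType) (D : nat).
Implicit Types (p q : {mpoly k[4]}) (m u : 'X_{1..4}).

Definition W m : k :=
  if (co m 0 + co m 1 == D + 4)%N && (co m 2 + co m 3 == D + 4)%N
  then (-1) ^+ (co m 0 + co m 2) else 0.

Definition lam p : k := \sum_(m : 'X_{1..4 < (2 * D + 9)%N}) W m * p@_m.

Lemma lamD p q : lam (p + q) = lam p + lam q.
Proof. by rewrite /lam -big_split /=; apply: eq_bigr => m _; rewrite mcoeffD mulrDr. Qed.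

Lemma lam0 : lam 0 = 0.
Proof. by rewrite /lam big1 // => m _; rewrite mcoeff0 mulr0. Qed.

Lemma lamZ c p : lam (c *: p) = c * lam p.
Proof. by rewrite /lam mulr_sumr; apply: eq_bigr => m _; rewrite mcoeffZ mulrCA. Qed.

Lemma lam_sum (I : Type) (r : seq I) (P : pred I) (F : I -> {mpoly k[4]}) :
  lam (\sum_(i <- r | P i) F i) = \sum_(i <- r | P i) lam (F i).
Proof. exact: (big_morph lam lamD lam0). Qed.

Lemma W_deg m : W m != 0 -> mdeg m = (2 * D + 8)%N.
Proof.
rewrite /W mdeg4; case: andP => [[/eqP h1 /eqP h2] _|]; last by rewrite eqxx.
lia.
Qed.

Lemma W_std m : W m != 0 -> stdM D m.
Proof.
rewrite /W /stdM /stdN; case: andP => [[/eqP h1 /eqP h2] _|]; last by rewrite eqxx.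
apply/and5P; split; lia.
Qed.

Lemma lamX m : lam 'X_[m] = W m.
Proof.
rewrite /lam; case: (boolP (mdeg m < 2 * D + 9)%N) => hm.
  rewrite (bigD1 (BMultinom hm)) //= mcoeffX eqxx mulr1 big1 ?addr0 // => j hj.
  rewrite mcoeffX; case: eqP => [e|]; last by rewrite mulr0.
  suff hh : j = BMultinom hm by rewrite hh eqxx in hj.
  by apply: val_inj; rewrite /= e.
have -> : W m = 0.
  apply/eqP; apply: contraR hm => /W_deg ->; lia.
apply: big1 => j _; rewrite mcoeffX; case: eqP => [e|]; last by rewrite mulr0.
by move: hm; rewrite e bmdeg.
Qed.

Lemma lam_expand p : lam p = \sum_(u <- msupp p) p@_u * W u.
Proof.
by rewrite {1}[p]mpolyE lam_sum; apply: eq_bigr => u _; rewrite lamZ lamX.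
Qed.

Lemma lam_gen p g : g \in Gs (D + 5) -> lam (p * 'X_[g]) = 0.
Proof.
move=> hg; rewrite {1}[p]mpolyE big_distrl /= lam_sum; apply: big1 => u _.
rewrite -scalerAl -mpolyXD lamZ lamX.
case: (boolP (W (u + g)%MM == 0)) => [/eqP->|/W_std hs]; first by rewrite mulr0.
by move: (std_nodiv hs hg); rewrite lem_addl.
Qed.

Lemma lam_ideal p : in_ideal (I_lemma5p4 k (D + 5)) p -> lam p = 0.
Proof.
rewrite gensE => -[cs ->]; rewrite lam_sum; apply: big1 => j _.
have hj : (j < size (Gs (D + 5)))%N by [].
by rewrite (nth_map 0%MM) // lam_gen // mem_nth.
Qed.

Lemma Wsum u : \sum_(j < 4) W (u + U_(j))%MM = 0.
Proof.
rewrite !big_ord_recl big_ord0 addr0.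
have E (j : 'I_4) (i : nat) : (i < 4)%N -> co (u + U_(j))%MM i = (co u i + (val j == i))%N.
  by move=> hi; rewrite coD /co mnm1E -(inj_eq val_inj) /= inordK.
rewrite /W !E //= !addn0.
set a := co u 0; set b := co u 1; set c := co u 2; set e := co u 3.
rewrite (_ : (a + 1 + b) = (a + (b + 1)))%N; last lia.
rewrite (_ : (c + 1 + e) = (c + (e + 1)))%N; last lia.
rewrite (_ : (a + 1 + c) = (a + c).+1)%N; last lia.
rewrite (_ : (a + (c + 1)) = (a + c).+1)%N; last lia.
rewrite !exprS !mulN1r.
by case: ifP => _; case: ifP => _; ring.
Qed.

Lemma lamB p q : lam (p - q) = lam p - lam q.
Proof. by rewrite -scaleN1r lamD lamZ mulN1r. Qed.

Lemma lam_lin g : lam ((\sum_(j < 4) 'X_j) * g) = 0.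
Proof.
rewrite big_distrl /= lam_sum.
under eq_bigr => j _ do rewrite {1}[g]mpolyE big_distrr /= lam_sum.
rewrite exchange_big /=; apply: big1 => u _.
transitivity (g@_u * \sum_(j < 4) W (u + U_(j))%MM); last by rewrite Wsum mulr0.
rewrite mulr_sumr; apply: eq_bigr => j _.
by rewrite -scalerAr -mpolyXD lamZ lamX addmC.
Qed.

Lemma not_surj : ~ mult_surj (I_lemma5p4 k (D + 5)) (\sum_(j < 4) 'X_j) (2 * (D + 5) - 3).
Proof.
move=> H.
pose ms := mk4 0 (D + 4) 0 (D + 4).
have [c0 c1 c2 c3] := co_mk4 0 (D + 4) 0 (D + 4).
have hf : ('X_[ms] : {mpoly k[4]}) \is (2 * (D + 5) - 3).+1.-homog.
  apply/dhomogP => m'; rewrite msuppX inE => /eqP ->.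
  change (mdeg ms = (2 * (D + 5) - 3).+1).
  by rewrite mdeg4 c0 c1 c2 c3; lia.
case: (H _ hf) => g [_ hI].
move: (lam_ideal hI); rewrite lamB lam_lin subr0 lamX /W c0 c1 c2 c3 !add0n eqxx /=.
by move/eqP; rewrite oner_eq0.
Qed.
End Lam.

Section C.
Local Open Scope nat_scope.
Variable D : nat.
Definition psiN (a b c e : nat) : nat * nat * nat * nat :=
  if b + c < D + 5 then
    if a < c then (if D + 5 <= a + e then (a - 1, b, c, e) else (a, b, c, e - 1))
    else if D + 5 <= c + e then (a - 1, b, c, e)
    else if 0 < b then (a, b - 1, c, e)
    else if c <= D + 1 then (c + 3, D + 1, 0, D + 3 - c)
    else if c == D + 2 then (D + 4, D + 1, 1, 1)
    else if c == D + 3 then (D + 4, D + 1, 2, 0)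
    else (D + 3, D + 1, 1, 2)
  else if D + 5 <= c + e then (if D + 5 <= a + e then (a - 1, b, c, e) else (a, b, c, e - 1))
  else if b < e then (a - 1, b, c, e) else (a, b, c - 1, e).


Lemma psiN_ok a b c e : stdN D a b c e -> a + b + c + e = 2 * D + 8 ->
  let: (a', b', c', e') := psiN a b c e in
  stdN D a' b' c' e' /\ (a' + b' + c' + e' = 2 * D + 7).
Proof.
rewrite /psiN /stdN => /and5P [ha hb hc he hs] hsum.
repeat case: ifP => ?; lia.
Qed.

Lemma psiN_inj a b c e a' b' c' e' :
  stdN D a b c e -> a + b + c + e = 2 * D + 8 ->
  stdN D a' b' c' e' -> a' + b' + c' + e' = 2 * D + 8 ->
  psiN a b c e = psiN a' b' c' e' -> a = a' /\ b = b' /\ c = c' /\ e = e'.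
Proof.
rewrite /psiN /stdN => /and5P [ha hb hc he hs] hsum /and5P [ha' hb' hc' he' hs'] hsum'.
repeat case: ifP => ?; intros H; pose proof (f_equal (fun t => t.1.1.1) H); pose proof (f_equal (fun t => t.1.1.2) H); pose proof (f_equal (fun t => t.1.2) H); pose proof (f_equal (fun t => t.2) H); simpl in *; clear H; lia.
Qed.
End C.

Section Phi.
Variables (k : fieldType) (D : nat).
Implicit Types (p q : {mpoly k[4]}) (m u : 'X_{1..4}).

Definition psiM m : 'X_{1..4} :=
  let t := psiN D (co m 0) (co m 1) (co m 2) (co m 3) in mk4 t.1.1.1 t.1.1.2 t.1.2 t.2.

Lemma psiM_co m : psiN D (co m 0) (co m 1) (co m 2) (co m 3) =
  (co (psiM m) 0, co (psiM m) 1, co (psiM m) 2, co (psiM m) 3).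
Proof.
rewrite /psiM; case: (psiN _ _ _ _ _) => [[[a b] c] e] /=.
by have [-> -> -> ->] := co_mk4 a b c e.
Qed.

Lemma psiM_ok m : stdM D m -> mdeg m = (2 * D + 8)%N ->
  stdM D (psiM m) /\ mdeg (psiM m) = (2 * D + 7)%N.
Proof.
rewrite /stdM !mdeg4 => hs hd.
have := psiN_ok hs hd; rewrite psiM_co; done.
Qed.

Lemma psiM_inj m1 m2 : stdM D m1 -> mdeg m1 = (2 * D + 8)%N ->
  stdM D m2 -> mdeg m2 = (2 * D + 8)%N -> psiM m1 = psiM m2 -> m1 = m2.
Proof.
rewrite /stdM !mdeg4 => h1 d1 h2 d2 e.
have := psiN_inj h1 d1 h2 d2; rewrite !psiM_co e => /(_ erefl) [? [? [? ?]]].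
by apply: mnm4P.
Qed.

Definition Phi p : {mpoly k[4]} :=
  \sum_(m : 'X_{1..4 < (2 * D + 9)%N} | stdM D m && (mdeg m == 2 * D + 8)%N) p@_m *: 'X_[psiM m].

Lemma Phi_homog p : Phi p \is (2 * D + 7).-homog.
Proof.
apply: rpred_sum => m /andP [hs /eqP hd]; apply: rpredZ.
apply/dhomogP => m'; rewrite msuppX inE => /eqP ->.
by case: (psiM_ok hs hd).
Qed.

Lemma Phi_lin (I : finType) (c : I -> k) (f : I -> {mpoly k[4]}) :
  Phi (\sum_i c i *: f i) = \sum_i c i *: Phi (f i).
Proof.
rewrite /Phi.
under eq_bigr => m _ do rewrite raddf_sum /= scaler_suml.
rewrite exchange_big /=; apply: eq_bigr => i _.
by rewrite scaler_sumr; apply: eq_bigr => m _; rewrite mcoeffZ scalerA.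
Qed.

Lemma Phi_coef p (m0 : 'X_{1..4 < (2 * D + 9)%N}) : stdM D m0 -> mdeg m0 = (2 * D + 8)%N ->
  (Phi p)@_(psiM m0) = p@_m0.
Proof.
move=> hs hd; rewrite /Phi raddf_sum /= (bigD1 m0) /=; last by rewrite hs hd eqxx.
rewrite mcoeffZ mcoeffX eqxx mulr1 big1 ?addr0 // => m /andP [/andP [hs' /eqP hd'] hne].
rewrite mcoeffZ mcoeffX; case: eqP => [e|]; last by rewrite mulr0.
have := psiM_inj hs' hd' hs hd e => /val_inj e'.
by rewrite e' eqxx in hne.
Qed.

End Phi.

Theorem lemma5p4 (k : fieldType) (hk : [pchar k] =i pred0) (d : nat)
    (hd : (5 <= d)%N) :
  fails_WLP_surj (I_lemma5p4 k d) (2 * d - 3)%N.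
Proof.
have [D ->] : exists D, d = (D + 5)%N by exists (d - 5)%N; lia.
split; last exact: not_surj.
move=> m [f [hom ind]].
exists (fun j => Phi D (f j)); split.
  move=> j; have -> : (2 * (D + 5) - 3 = 2 * D + 7)%N by lia.
  exact: Phi_homog.
move=> c hI j; apply: ind.
have e1 : ((2 * (D + 5) - 3).+1 = 2 * D + 8)%N by lia.
set P := \sum_(j < m) c j *: f j.
have hP : P \is (2 * D + 8).-homog.
  by apply: rpred_sum => i _; apply: rpredZ; rewrite -e1; exact: hom.
have coefP (m0 : 'X_{1..4 < (2 * D + 9)%N}) :
    stdM D m0 -> mdeg m0 = (2 * D + 8)%N -> P@_m0 = 0.
  move=> hs hd0; rewrite -(Phi_coef P hs hd0) /P Phi_lin.
  have [hs' _] := psiM_ok hs hd0.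
  apply: (ideal_coef0 (Gs := Gs (D + 5))); first by rewrite -gensE.
  by move=> g hg; exact: (std_nodiv hs' hg).
rewrite gensE; apply: ideal_of_supp => mm hmm.
apply: nstd_div; apply/negP => hs.
have hdm : mdeg mm = (2 * D + 8)%N.
  exact: (dhomog_mf hP hmm).
have hb : (mdeg mm < 2 * D + 9)%N by rewrite hdm; lia.
move: hmm; rewrite mcoeff_msupp.
have := coefP (BMultinom hb) hs hdm.
by rewrite /= => ->; rewrite eqxx.
Qed.
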